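(* Let $U,W$ be Hilbert spaces, $T: U\rightrightarrows U$, $(\hat u,\hat w)\in\operatorname{graph}T$, $\Xi,N,M\in\mathcal{L}(U;U)$ with $M\ge0$, and $\alpha>0$. Suppose: (i) $N=A^*B$ for some $A,B\in\mathcal{L}(U;W)$; (ii) $\Xi_\alpha:=\alpha^{-1}\Xi-\alpha^{-2}A^*A/4 \le \min\{1,\alpha^{-1}\}M$; (iii) $(M,M-\Xi_\alpha)\in\mathcal{P}(T^{-1}(\hat w),\hat u)$ when $\alpha\in(0,1)$. Then $T$ is $(\Xi_\alpha, B^*B, M)$-partially subregular at $(\hat u,\hat w)$ if it is $(\Xi,N,M)$-partially strongly submonotone at this point. If (iii) does not hold (but (i) and (ii) do), $(\Xi,N,M)$-partial strong submonotonicity at $(\hat u,\hat w)$ still implies $(\alpha\Xi_\alpha,\alpha B^*B,M)$-partial subregularity there.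
   Context: For $T\in\mathcal{L}(U;U)$: $\langle x,z\rangle_T:=\langle Tx,z\rangle$, $\|x\|^2_T:=\langle Tx,x\rangle$, $\operatorname{dist}^2_T(z,A):=\inf_{u\in A}\|z-u\|^2_T$ ($\inf\emptyset=+\infty$); $T\ge S$ means $T-S$ positive semidefinite. Partial strong submonotonicity: for $\Xi,N,M$ with $M\ge0$, $T$ is $(\Xi,N,M)$-partially strongly submonotone at $(\hat u,\hat w)$ if there is a neighbourhood $\mathcal{U}\ni\hat u$ with $\inf_{u^*\in T^{-1}(\hat w)}(\langle w-\hat w,u-u^*\rangle_N+\|u-u^*\|^2_{M-\Xi})\ge\operatorname{dist}^2_M(u,T^{-1}(\hat w))$ for all $u\in\mathcal{U}$, $w\in T(u)$. Partial subregularity: for $M,P,N$ with $N\ge0$, $M\ge0$, $M\ge P$, $T$ is $(P,N,M)$-partially subregular at $(\hat u,\hat w)$ if there is a neighbourhood $\mathcal{U}\ni\hat u$ with $\operatorname{dist}^2_N(\hat w,T(u))+\operatorname{dist}^2_{M-P}(u,T^{-1}(\hat w))\ge\operatorname{dist}^2_M(u,T^{-1}(\hat w))$ for all $u\in\mathcal{U}$. $(M,M')\in\mathcal{P}(A,\hat u)$ means there is a neighbourhood $\mathcal{U}'\ni\hat u$ such that each $u\in\mathcal{U}'$ has a common projection onto $A$ with respect to $\|\cdot\|_M$ and $\|\cdot\|_{M'}$. *)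

(* Defs.v *)
From HB Require Import structures.
From mathcomp Require Import all_boot all_order all_algebra.
From mathcomp Require Import all_classical all_reals all_analysis.
Import Order.TTheory GRing.Theory Num.Theory.
Import numFieldNormedType.Exports.

Set Implicit Arguments.
Unset Strict Implicit.
Unset Printing Implicit Defensive.

Local Open Scope classical_set_scope.
Local Open Scope ring_scope.

Section Defs.
Context {R : realType}.

Definition inner_product {U : normedModType R} (ip : U -> U -> R) : Prop :=
  [/\ forall x y, ip x y = ip y x,
      forall (a : R) x y z, ip (a *: x + y) z = a * ip x z + ip y z &
      forall x, ip x x = `|x| ^+ 2].

Definition bounded_linear {U V : normedModType R} (f : U -> V) : Prop :=
  linear f /\ continuous f.

Definition is_adjoint {U V : normedModType R} (ipU : U -> U -> R)
  (ipV : V -> V -> R) (A : U -> V) (As : V -> U) : Prop :=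
  forall u v, ipV (A u) v = ipU u (As v).

Context {U : normedModType R} (ip : U -> U -> R).

Definition opsub (S T : U -> U) : U -> U := fun x => S x - T x.
Definition opscale (a : R) (T : U -> U) : U -> U := fun x => a *: T x.

Definition ipT (T : U -> U) (x z : U) : R := ip (T x) z.
Definition nsq (T : U -> U) (x : U) : R := ip (T x) x.
(* dist^2_T(z, A), with inf of the empty set = +oo *)
Definition dist2 (T : U -> U) (z : U) (A : set U) : \bar R :=
  ereal_inf [set (nsq T (z - u))%:E | u in A].
Definition psd (T : U -> U) : Prop := forall x, 0 <= nsq T x.
Definition ople (S T : U -> U) : Prop := forall x, nsq S x <= nsq T x.

Definition invimg (T : U -> set U) (w : U) : set U := [set u | T u w].

Definition partially_strongly_submonotone (T : U -> set U) (Xi N M : U -> U)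
  (uh wh : U) : Prop :=
  psd M /\
  exists V, nbhs uh V /\
    forall u w, V u -> T u w ->
      (dist2 M u (invimg T wh) <=
       ereal_inf [set (ipT N (w - wh) (u - us) + nsq (opsub M Xi) (u - us))%:E
                 | us in invimg T wh])%E.

Definition partially_subregular (T : U -> set U) (P N M : U -> U)
  (uh wh : U) : Prop :=
  [/\ psd N, psd M, ople P M &
  exists V, nbhs uh V /\
    forall u, V u ->
      (dist2 M u (invimg T wh) <=
       dist2 N wh (T u) + dist2 (opsub M P) u (invimg T wh))%E].

Definition is_proj (M : U -> U) (A : set U) (u p : U) : Prop :=
  A p /\ forall a, A a -> nsq M (u - p) <= nsq M (u - a).

Definition common_proj (M M' : U -> U) (A : set U) (uh : U) : Prop :=
  exists V, nbhs uh V /\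
    forall u, V u -> exists p, is_proj M A u p /\ is_proj M' A u p.

End Defs.

(* Main.v *)
Require Import Defs.
From HB Require Import structures.
From mathcomp Require Import all_boot all_order all_algebra.
From mathcomp Require Import all_classical all_reals all_analysis.
From mathcomp Require Import ring lra.
Import Order.TTheory GRing.Theory Num.Theory.
Import numFieldNormedType.Exports.
Local Open Scope classical_set_scope.
Local Open Scope ring_scope.

Section IP.
Context {R : realType} {V : normedModType R} (ip : V -> V -> R).
Hypothesis hip : inner_product ip.

Lemma ip0l z : ip 0 z = 0.
Proof.
case: hip => _ hl _. have := hl 1 0 0 z. rewrite scale1r addr0 mul1r.
move=> h. have : ip 0 z + 0 = ip 0 z + ip 0 z by rewrite addr0.
by move/addrI.
Qed.

Lemma ipZl a x z : ip (a *: x) z = a * ip x z.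
Proof. case: hip => _ hl _. by have := hl a x 0 z; rewrite addr0 ip0l addr0. Qed.

Lemma ipDl x y z : ip (x + y) z = ip x z + ip y z.
Proof. case: hip => _ hl _. by have := hl 1 x y z; rewrite scale1r mul1r. Qed.

Lemma ipNl x z : ip (- x) z = - ip x z.
Proof. by rewrite -scaleN1r ipZl mulN1r. Qed.

Lemma ipBl x y z : ip (x - y) z = ip x z - ip y z.
Proof. by rewrite ipDl ipNl. Qed.

Lemma ipC x y : ip x y = ip y x.
Proof. by case: hip. Qed.

Lemma ip_ge0 x : 0 <= ip x x.
Proof. case: hip => _ _ h. by rewrite h exprn_ge0. Qed.

Lemma ipNN x : ip (- x) (- x) = ip x x.
Proof. by rewrite ipNl (ipC x (- x)) ipNl opprK. Qed.

Lemma ipBr x y z : ip z (x - y) = ip z x - ip z y.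
Proof. by rewrite (ipC z (x - y)) ipBl (ipC z x) (ipC z y). Qed.

Lemma ipZr a x z : ip z (a *: x) = a * ip z x.
Proof. by rewrite (ipC z (a *: x)) ipZl (ipC z x). Qed.

Lemma young k a b : 2 * k * ip a b <= k ^+ 2 * ip a a + ip b b.
Proof.
have := ip_ge0 (k *: a - b).
rewrite ipBl !ipBr !ipZl !ipZr (ipC b a) => h. nra.
Qed.
End IP.
Arguments ip0l {R V ip} hip.
Arguments ipZl {R V ip} hip.
Arguments ipDl {R V ip} hip.
Arguments ipNl {R V ip} hip.
Arguments ipBl {R V ip} hip.
Arguments ipC {R V ip} hip.
Arguments ip_ge0 {R V ip} hip.
Arguments ipNN {R V ip} hip.
Arguments ipBr {R V ip} hip.
Arguments ipZr {R V ip} hip.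
Arguments young {R V ip} hip.

Lemma linN {R : realType} {U W : normedModType R} (B : U -> W) :
  bounded_linear B -> forall v, B (- v) = - B v.
Proof.
case=> hl _ v.
have B0 : B 0 = 0.
  have := hl 1 0 0. rewrite scale1r addr0 scale1r => h.
  have : B 0 + 0 = B 0 + B 0 by rewrite addr0.
  by move/addrI.
have := hl (-1) v 0. by rewrite addr0 B0 addr0 !scaleN1r.
Qed.

Lemma inf_sum {R : realType} {U : Type} (S1 S2 : set U) (f g : U -> R) (d : R) :
  (forall w, S1 w -> 0 <= f w) -> (forall u, S2 u -> 0 <= g u) ->
  (forall w u, S1 w -> S2 u -> d <= f w + g u) ->
  (d%:E <= ereal_inf [set (f w)%:E | w in S1] + ereal_inf [set (g u)%:E | u in S2])%E.
Proof.
move=> f0 g0 H.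
have I10 : (0 <= ereal_inf [set (f w)%:E | w in S1])%E.
  by apply: le_ereal_inf_tmp => _ [w Sw <-]; rewrite lee_fin f0.
have I20 : (0 <= ereal_inf [set (g w)%:E | w in S2])%E.
  by apply: le_ereal_inf_tmp => _ [w Sw <-]; rewrite lee_fin g0.
move: I10 I20.
case E1: (ereal_inf [set (f w)%:E | w in S1]) => [r1| |] //;
case E2: (ereal_inf [set (g w)%:E | w in S2]) => [r2| |] // _ _.
- rewrite -EFinD lee_fin.
  have : ((d - r2)%:E <= ereal_inf [set (f w)%:E | w in S1])%E.
    apply: le_ereal_inf_tmp => _ [w Sw <-]. rewrite lee_fin lerBlDr addrC -lerBlDr.
    rewrite -lee_fin -E2. apply: le_ereal_inf_tmp => _ [u Su <-].
    by rewrite lee_fin lerBlDl H.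
  by rewrite E1 lee_fin; lra.
all: by rewrite ?addey ?addye ?leey.
Qed.

Theorem lemma4p9 (R : realType) (U W : completeNormedModType R)
  (ipU : U -> U -> R) (ipW : W -> W -> R)
  (hU : inner_product ipU) (hW : inner_product ipW)
  (T : U -> set U) (uh wh : U) (hgraph : T uh wh)
  (Xi N M : U -> U)
  (hXi : bounded_linear Xi) (hN : bounded_linear N) (hM : bounded_linear M)
  (hMpsd : psd ipU M)
  (alpha : R) (halpha : 0 < alpha)
  (A B : U -> W) (As Bs : W -> U)
  (hA : bounded_linear A) (hB : bounded_linear B)
  (hAs : is_adjoint ipU ipW A As) (hBs : is_adjoint ipU ipW B Bs)
  (hNAB : forall u, N u = As (B u)) :
  let Xia : U -> U := fun u => alpha^-1 *: Xi u - (alpha ^- 2 / 4) *: As (A u) in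
  ople ipU Xia (opscale (Num.min 1 alpha^-1) M) ->
  ((alpha < 1 -> common_proj ipU M (opsub M Xia) (invimg T wh) uh) ->
     partially_strongly_submonotone ipU T Xi N M uh wh ->
     partially_subregular ipU T Xia (fun u => Bs (B u)) M uh wh)
  /\
  (partially_strongly_submonotone ipU T Xi N M uh wh ->
     partially_subregular ipU T (opscale alpha Xia)
       (opscale alpha (fun u => Bs (B u))) M uh wh).
Proof.
have subr_ge0_r : forall (x y : R), x <= y -> 0 <= y - x by move=> x y; rewrite subr_ge0.
move=> Xia hle.
set S := invimg T wh.
set mn := Num.min 1 alpha^-1.
set bt := alpha^-1.
have bt0 : 0 < bt by rewrite invr_gt0.
have abt : alpha * bt = 1 by rewrite mulfV // gt_eqF.
have mn1 : mn <= 1 by rewrite ge_min lexx.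
have mnb : mn <= bt by rewrite ge_min lexx orbT.
have c2 : alpha ^- 2 / 4 = bt ^+ 2 / 4 by rewrite exprVn.
have nXia : forall x, nsq ipU Xia x = bt * ipU (Xi x) x - bt ^+ 2 / 4 * ipW (A x) (A x).
  move=> x; rewrite /nsq /Xia (ipBl hU) !(ipZl hU) (ipC hU (As (A x)) x) -hAs c2 //.
have nMX : forall x, nsq ipU (opsub M Xia) x = nsq ipU M x - nsq ipU Xia x.
  by move=> x; rewrite /nsq /opsub (ipBl hU).
have nMaX : forall x, nsq ipU (opsub M (opscale alpha Xia)) x = nsq ipU M x - alpha * nsq ipU Xia x.
  by move=> x; rewrite /nsq /opsub /opscale (ipBl hU) (ipZl hU).
have nMXi : forall x, nsq ipU (opsub M Xi) x = nsq ipU M x - ipU (Xi x) x.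
  by move=> x; rewrite /nsq /opsub (ipBl hU).
have nN : forall y x, ipT ipU N y x = ipW (A x) (B y).
  by move=> y x; rewrite /ipT hNAB (ipC hU (As (B y)) x) -hAs.
have nB : forall y, nsq ipU (fun u => Bs (B u)) y = ipW (B y) (B y).
  by move=> y; rewrite /nsq (ipC hU (Bs (B y)) y) -hBs.
have naB : forall y, nsq ipU (opscale alpha (fun u => Bs (B u))) y = alpha * ipW (B y) (B y).
  by move=> y; rewrite /nsq /opscale (ipZl hU) -/(nsq ipU (fun u => Bs (B u)) y) nB.
have Bfl : forall w, ipW (B (wh - w)) (B (wh - w)) = ipW (B (w - wh)) (B (w - wh)).
  by move=> w; rewrite -opprB (@linN _ _ _ B hB) (ipNN hW).
have hle' : forall x, nsq ipU Xia x <= mn * nsq ipU M x.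
  by move=> x; have := hle x; rewrite /nsq /opscale (ipZl hU).
have Mge0 : forall x, 0 <= nsq ipU M x by [].
have key : forall V, (forall u w, V u -> T u w ->
      (dist2 ipU M u S <=
       ereal_inf [set (ipT ipU N (w - wh) (u - us) + nsq ipU (opsub M Xi) (u - us))%:E
                 | us in S])%E) ->
    forall u, V u -> exists r, dist2 ipU M u S = r%:E /\
      (forall us, S us -> r <= nsq ipU M (u - us)) /\
      (forall w us, T u w -> S us -> r <= ipW (A (u - us)) (B (w - wh)) + nsq ipU M (u - us) - ipU (Xi (u - us)) (u - us)) /\
      (forall p, is_proj ipU M S u p -> nsq ipU M (u - p) <= r).
  move=> V hV u Vu.
  case E: (dist2 ipU M u S) => [r| |].
  - exists r; split => //; split; last split.
    + move=> us Sus; rewrite -lee_fin -E; apply: ereal_inf_lbound; by exists us.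
    + move=> w us Tw Sus; rewrite -lee_fin -E.
      apply: le_trans (hV u w Vu Tw) _; apply: ereal_inf_lbound; exists us => //.
      by rewrite nN nMXi addrA.
    + move=> p [Sp hp]; rewrite -lee_fin -E; apply: le_ereal_inf_tmp => _ [us Sus <-].
      by rewrite lee_fin hp.
  - have : (dist2 ipU M u S <= (nsq ipU M (u - uh))%:E)%E.
      apply: ereal_inf_lbound; by exists uh.
    by rewrite E.
  - have : (0 <= dist2 ipU M u S)%E.
      by apply: le_ereal_inf_tmp => _ [us Sus <-]; rewrite lee_fin.
    by rewrite E.
split.
- move=> hcp [_ [Vs [nVs hVs]]].
  have gnn : forall x, 0 <= nsq ipU (opsub M Xia) x.
    move=> x; rewrite nMX; have := hle' x; have := Mge0 x => h1 h2.
    have h5 := mulr_ge0 (subr_ge0_r _ _ mn1) h1. nra.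
  have fnn : forall y, 0 <= nsq ipU (fun u => Bs (B u)) y.
    by move=> y; rewrite nB; exact: (ip_ge0 hW).
  split => //.
    move=> x; rewrite /ople; have := gnn x; rewrite nMX; lra.
  case: (ltP alpha 1) => ha.
  + have [V' [nV' hV']] := hcp ha.
    exists (Vs `&` V'); split; first exact: filterI.
    move=> u [Vu V'u].
    have [r [Er [h1 [h2 h3]]]] := key Vs hVs u Vu.
    have [p0 [Mp Xp]] := hV' u V'u.
    rewrite Er /dist2.
    apply: (@inf_sum _ _ _ _ (fun w => nsq ipU (fun u => Bs (B u)) (wh - w))
                  (fun us => nsq ipU (opsub M Xia) (u - us))).
    * by move=> w _; apply: fnn.
    * by move=> us _; apply: gnn.
    move=> w us Tw Sus /=.
    have Sp0 := Mp.1.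
    have hpr := Xp.2 us Sus.
    have hpr' : nsq ipU (fun u => Bs (B u)) (wh - w) + nsq ipU (opsub M Xia) (u - p0) <= nsq ipU (fun u => Bs (B u)) (wh - w) + nsq ipU (opsub M Xia) (u - us) by rewrite lerD2l.
    apply: le_trans hpr'.
    rewrite nB Bfl nMX nXia.
    have := h3 p0 Mp; have := h1 p0 Sp0; have := h2 w p0 Tw Sp0.
    have := young hW (bt / 2) (A (u - p0)) (B (w - wh)).
    move: (ipW (A (u - p0)) (B (w - wh))) (ipW (A (u - p0)) (A (u - p0)))
      (ipW (B (w - wh)) (B (w - wh))) (nsq ipU M (u - p0)) (ipU (Xi (u - p0)) (u - p0)) => p a q m xi hy hs hl hu.
    have hb : 0 <= bt * (p - xi) by apply: mulr_ge0; [exact: ltW | lra].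
    nra.
  + exists Vs; split => // u Vu.
    have [r [Er [h1 [h2 h3]]]] := key Vs hVs u Vu.
    have bt1 : bt <= 1 by rewrite invf_le1.
    rewrite Er /dist2.
    apply: (@inf_sum _ _ _ _ (fun w => nsq ipU (fun u => Bs (B u)) (wh - w))
                  (fun us => nsq ipU (opsub M Xia) (u - us))).
    * by move=> w _; apply: fnn.
    * by move=> us _; apply: gnn.
    move=> w us Tw Sus /=.
    rewrite nB Bfl nMX nXia.
    have := h1 us Sus; have := h2 w us Tw Sus.
    have := young hW (bt / 2) (A (u - us)) (B (w - wh)).
    move: (ipW (A (u - us)) (B (w - wh))) (ipW (A (u - us)) (A (u - us)))
      (ipW (B (w - wh)) (B (w - wh))) (nsq ipU M (u - us)) (ipU (Xi (u - us)) (u - us)) => p a q m xi hy hs hl.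
    have hb1 : 0 <= (1 - bt) * (m - r) by apply: mulr_ge0; lra.
    have hb2 : 0 <= bt * (p + m - xi - r) by apply: mulr_ge0; lra.
    nra.
- move=> [_ [Vs [nVs hVs]]].
  split.
  + by move=> y; rewrite naB; apply: mulr_ge0; [exact: ltW | exact: (ip_ge0 hW)].
  + by [].
  + move=> x; rewrite /ople /nsq /opscale (ipZl hU) -/(nsq ipU Xia x).
    have := hle' x; have := Mge0 x => h1 h2.
    have h3 : alpha * mn <= 1 by rewrite -abt ler_wpM2l // ltW.
    have h4 := mulr_ge0 (ltW halpha) (subr_ge0_r _ _ h2).
    have h5 := mulr_ge0 (subr_ge0_r _ _ h3) h1.
    rewrite -/(nsq ipU M x). nra.
  exists Vs; split => // u Vu.
  have [r [Er [h1 [h2 h3]]]] := key Vs hVs u Vu.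
  rewrite Er /dist2.
  apply: (@inf_sum _ _ _ _ (fun w => nsq ipU (opscale alpha (fun u => Bs (B u))) (wh - w))
                  (fun us => nsq ipU (opsub M (opscale alpha Xia)) (u - us))).
  + by move=> w _; rewrite naB; apply: mulr_ge0; [exact: ltW | exact: (ip_ge0 hW)].
  + move=> us _; rewrite nMaX.
    have := hle' (u - us); have := Mge0 (u - us) => h1' h2'.
    have h3' : alpha * mn <= 1 by rewrite -abt ler_wpM2l // ltW.
    have h4 := mulr_ge0 (ltW halpha) (subr_ge0_r _ _ h2').
    have h5 := mulr_ge0 (subr_ge0_r _ _ h3') h1'.
    nra.
  + move=> w us Tw Sus /=.
    rewrite naB nMaX nXia Bfl.
    have := h2 w us Tw Sus.
    have := young hW (bt / 2) (A (u - us)) (B (w - wh)).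
    move: (ipW (A (u - us)) (B (w - wh))) (ipW (A (u - us)) (A (u - us)))
      (ipW (B (w - wh)) (B (w - wh))) (nsq ipU M (u - us)) (ipU (Xi (u - us)) (u - us)) => p a q m xi hy hs.
    have qa : 0 <= alpha * (bt ^+ 2 / 4 * a + q - bt * p).
      apply: mulr_ge0; [exact: ltW | nra].
    have E : alpha * q + (m - alpha * (bt * xi - bt ^+ 2 / 4 * a)) = m - (alpha*bt) * xi + alpha * (bt ^+ 2 / 4 * a + q - bt * p) + (alpha*bt) * p by ring.
    rewrite E abt !mul1r; move: qa; generalize (alpha * (bt ^+ 2 / 4 * a + q - bt * p)) => Z qa; lra.
Qed.
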